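(* Let $N \ge 1$ and $p \ge 1$. Then there exist $\delta_0>0$ and a closed half-space $H\subset \mathbb{R}^N$ with $0\in H$ such that for every $0<\delta<\delta_0$ there exists a measurable function $u:\mathbb{R}^N\to\mathbb{R}$ with $I_\delta(u^H)>I_\delta(u)$.
   Context: For $\delta>0$, $p\ge 1$ and measurable $u:\mathbb{R}^N\to\mathbb{R}$, define $$I_\delta(u):=\iint_{\{(x,y)\in\mathbb{R}^N\times\mathbb{R}^N:\ |u(y)-u(x)|>\delta\}}\frac{\delta^p}{|x-y|^{N+p}}\,dx\,dy \in[0,+\infty].$$ For a closed half-space $H\subset\mathbb{R}^N$, let $\sigma_H:\mathbb{R}^N\to\mathbb{R}^N$ denote the reflection across the hyperplane $\partial H$ (an isometry with $\sigma_H^2=\mathrm{Id}$ and $|x-y|<|x-\sigma_H(y)|$ for $x,y$ in the interior of $H$). The polarization (two-point rearrangement) of $u$ with respect to $H$ is $$u^H(x):=\begin{cases}\max\{u(x),u(\sigma_H(x))\}, & x\in H,\\ \min\{u(x),u(\sigma_H(x))\}, & x\in \mathbb{R}^N\setminus H.\end{cases}$$ *)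

(* Defs.v *)
From HB Require Import structures.
From mathcomp Require Import all_boot all_order all_algebra.
From mathcomp Require Import all_classical all_reals all_analysis.
Set Implicit Arguments. Unset Strict Implicit. Unset Printing Implicit Defensive.
Import Order.TTheory GRing.Theory Num.Theory.
Local Open Scope classical_set_scope.
Local Open Scope ring_scope.

Section Defs.
Variable R : realType.

Definition origin (n : nat) : n.-tuple R := [tuple (0:R) | i < n].

Definition dotN (n : nat) (a x : n.-tuple R) : R :=
  \sum_(i < n) tnth a i * tnth x i.

Definition distN (n : nat) (x y : n.-tuple R) : R :=
  Num.sqrt (\sum_(i < n) (tnth x i - tnth y i) ^+ 2).

Definition in_halfspace (n : nat) (a : n.-tuple R) (c : R) (x : n.-tuple R) : bool :=
  dotN a x <= c.

Definition reflect_hs (n : nat) (a : n.-tuple R) (c : R) (x : n.-tuple R) : n.-tuple R :=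
  [tuple tnth x i - 2 * ((dotN a x - c) / dotN a a) * tnth a i | i < n].

Definition polarize (n : nat) (a : n.-tuple R) (c : R) (u : n.-tuple R -> R)
  (x : n.-tuple R) : R :=
  if in_halfspace a c x then Num.max (u x) (u (reflect_hs a c x))
  else Num.min (u x) (u (reflect_hs a c x)).

(* Lebesgue integral over R^n of a nonnegative function, computed as the
   iterated integral (Tonelli) of the one-dimensional Lebesgue integral. *)
Fixpoint intRN (n : nat) : (n.-tuple R -> \bar R) -> \bar R :=
  match n with
  | 0 => fun f => f [tuple]
  | n'.+1 => fun f =>
      (\int[@lebesgue_measure R]_(x in [set: R])
          intRN (fun t : n'.-tuple R => f (cons_tuple x t)))%E
  end.

Definition Idelta (n : nat) (p delta : R) (u : n.-tuple R -> R) : \bar R :=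
  intRN (fun x : n.-tuple R => intRN (fun y : n.-tuple R =>
    if delta < `|u y - u x| then
      ((delta `^ p) / (distN x y `^ (n%:R + p)))%:E
    else 0%E)).

End Defs.

(* Main.v *)
Require Import Defs.
From HB Require Import structures.
From mathcomp Require Import all_boot all_order all_algebra.
From mathcomp Require Import all_classical all_reals all_analysis.
From mathcomp Require Import measurable_realfun lebesgue_measure.
Import Order.TTheory GRing.Theory Num.Theory.
Local Open Scope classical_set_scope.
Local Open Scope ring_scope.
From mathcomp.algebra_tactics Require Import ring lra.

Module P1.
Lemma intRN_ge0 (R : realType) n (f : n.-tuple R -> \bar R) :
  (forall t, 0 <= f t)%E -> (0 <= intRN f)%E.
Proof.
elim: n f => [|n IH] f f0 /=; first exact: f0.
by apply: integral_ge0 => x _; apply: IH => t; exact: f0.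
Qed.

Lemma measurable_intRN (R : realType) n : forall d (X : measurableType d)
  (f : X -> n.-tuple R -> \bar R),
  measurable_fun setT (fun z : X * n.-tuple R => f z.1 z.2) ->
  (forall x t, 0 <= f x t)%E ->
  measurable_fun setT (fun x => intRN (f x)).
Proof.
elim: n => [|n IH] d X f mf f0 /=.
  have -> : (fun x => f x [tuple]) =
     (fun z : X * 0.-tuple R => f z.1 z.2) \o (fun x => (x, [tuple])) by [].
  apply: measurableT_comp mf _.
  by apply: measurable_fun_pair => //; exact: measurable_cst.
pose G := fun xz : X * R => intRN (fun t => f xz.1 (cons_tuple xz.2 t)).
have mG : measurable_fun setT G.
  apply: (IH _ _ (fun xz t => f xz.1 (cons_tuple xz.2 t))); last first.
    by move=> ? ?; exact: f0.
  have -> : (fun z : (X * R) * n.-tuple R => f z.1.1 (cons_tuple z.1.2 z.2)) =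
     (fun z : X * n.+1.-tuple R => f z.1 z.2) \o
     (fun z : (X * R) * n.-tuple R => (z.1.1, cons_tuple z.1.2 z.2)) by [].
  apply: measurableT_comp mf _.
  apply: measurable_fun_pair.
    exact: measurableT_comp measurable_fst measurable_fst.
  apply: (@measurable_cons _ _ _ _ (fun z : (X * R) * n.-tuple R => z.1.2) n
     (fun z => z.2)).
    exact: measurableT_comp measurable_snd measurable_fst.
  exact: measurable_snd.
have := @measurable_fun_fubini_tonelli_F _ _ X (measurableTypeR R) R lebesgue_measure G mG.
by apply => -[x z]; exact: intRN_ge0.
Qed.

Lemma mcons_pair (R : realType) n (f : n.+1.-tuple R -> \bar R) :
  measurable_fun setT f ->
  measurable_fun setT (fun z : R * n.-tuple R => f (cons_tuple z.1 z.2)).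
Proof.
move=> mf.
have -> : (fun z : R * n.-tuple R => f (cons_tuple z.1 z.2)) =
  f \o (fun z : R * n.-tuple R => cons_tuple z.1 z.2) by [].
apply: measurableT_comp mf _.
apply: (@measurable_cons _ _ _ _ (fun z : R * n.-tuple R => z.1) n (fun z => z.2)).
  exact: measurable_fst.
exact: measurable_snd.
Qed.

Lemma mcons_sec (R : realType) n (f : n.+1.-tuple R -> \bar R) (z : R) :
  measurable_fun setT f ->
  measurable_fun setT (fun t : n.-tuple R => f (cons_tuple z t)).
Proof.
move=> mf.
have -> : (fun t : n.-tuple R => f (cons_tuple z t)) =
  f \o (fun t : n.-tuple R => cons_tuple z t) by [].
apply: measurableT_comp mf _.
apply: (@measurable_cons _ _ _ _ (fun t : n.-tuple R => z) n (fun t => t)).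
  exact: measurable_cst.
exact: measurable_id.
Qed.

Lemma measurable_intRN_sec (R : realType) n (f : n.+1.-tuple R -> \bar R) :
  measurable_fun setT f -> (forall t, 0 <= f t)%E ->
  measurable_fun setT (fun z : R => intRN (fun t : n.-tuple R => f (cons_tuple z t))).
Proof.
move=> mf f0.
apply: (@measurable_intRN R n _ R (fun (z : R) (t : n.-tuple R) => f (cons_tuple z t))).
  exact: mcons_pair.
by move=> ? ?; exact: f0.
Qed.

Lemma intRN_le (R : realType) n (f g : n.-tuple R -> \bar R) :
  measurable_fun setT f -> measurable_fun setT g ->
  (forall t, 0 <= f t)%E -> (forall t, f t <= g t)%E -> (intRN f <= intRN g)%E.
Proof.
elim: n f g => [|n IH] f g mf mg f0 fg /=; first exact: fg.
have g0 : forall t, (0 <= g t)%E by move=> t; exact: le_trans (f0 t) (fg t).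
apply: ge0_le_integral => //.
- by move=> z _; apply: intRN_ge0 => t; exact: f0.
- exact: measurable_intRN_sec.
- exact: measurable_intRN_sec.
- move=> z _; apply: IH.
  + exact: mcons_sec.
  + exact: mcons_sec.
  + by move=> t; exact: f0.
  + by move=> t; exact: fg.
Qed.

Lemma intRN_add (R : realType) n (f g : n.-tuple R -> \bar R) :
  measurable_fun setT f -> measurable_fun setT g ->
  (forall t, 0 <= f t)%E -> (forall t, 0 <= g t)%E ->
  intRN (fun t => f t + g t)%E = (intRN f + intRN g)%E.
Proof.
elim: n f g => [|n IH] f g mf mg f0 g0 //=.
rewrite -ge0_integralD //.
- apply: eq_integral => z _; apply: IH.
  + exact: mcons_sec.
  + exact: mcons_sec.
  + by move=> t; exact: f0.
  + by move=> t; exact: g0.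
- by move=> z _; apply: intRN_ge0 => t; exact: f0.
- exact: measurable_intRN_sec.
- by move=> z _; apply: intRN_ge0 => t; exact: g0.
- exact: measurable_intRN_sec.
Qed.
End P1.
Import P1.

Module P2.
Definition cubeb (R : realType) n (t : n.-tuple R) : bool :=
  [forall i, (0 <= tnth t i <= 1)].
Arguments cubeb {R n}.

Lemma behead_cons (R : realType) n (z : R) (t : n.-tuple R) :
  behead_tuple (cons_tuple z t) = t.
Proof. exact: val_inj. Qed.

Lemma cubeb_cons (R : realType) n (z : R) (t : n.-tuple R) :
  cubeb (cons_tuple z t) = (0 <= z <= 1) && cubeb t.
Proof.
apply/forallP/andP => [H|[Hz /forallP Ht] i].
  split; first by have := H ord0; rewrite tnth0.
  by apply/forallP => i; have := H (lift ord0 i); rewrite tnthS.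
by case: (unliftP ord0 i) => [j ->|->]; rewrite ?tnthS ?tnth0.
Qed.

Lemma cubeb0 (R : realType) (t : 0.-tuple R) : cubeb t.
Proof. by apply/forallP => -[]. Qed.

Lemma int_indic_itv (R : realType) (c a : R) : 0 <= c ->
  (\int[@lebesgue_measure R]_(z in [set: R]) (c * ((a <= z <= a + 1)%R)%:R)%:E)%E = c%:E.
Proof.
move=> c0.
have -> : (fun z : R => (c * ((a <= z <= a + 1)%R)%:R)%:E) =
  (fun z => (c * \1_(`[a, a + 1]%classic) z)%:E).
  apply: funext => z; rewrite indicE; congr ((_ * _)%:E); congr (_%:R).
  case: (boolP (a <= z <= a + 1)) => H.
    by rewrite mem_set //= in_itv.
  by rewrite memNset //= in_itv; apply/negP.
have h := @integralZl_indic _ _ R (@lebesgue_measure R) setT measurableT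
  (fun _ => `[a, a + 1]%classic) c.
rewrite /= in h; rewrite h //; last by move=> /lt_geF; rewrite c0.
rewrite integral_indic // setIT.
have := lebesgue_measure_itv `[a, a + 1].
rewrite /= lte_fin ltrDl ltr01 -EFinD addrAC subrr add0r => L.
by rewrite [X in (_ * X)%E](_ : _ = 1%E) ?mule1 //; exact: L.
Qed.

Lemma intRN_cube (R : realType) n (c : R) : 0 <= c ->
  intRN (fun t : n.-tuple R => (c * (cubeb t)%:R)%:E) = c%:E.
Proof.
elim: n c => [|n IH] c c0 /=; first by rewrite cubeb0 mulr1.
under eq_integral => z _.
  have -> : (fun t : n.-tuple R => (c * (cubeb (cons_tuple (z : R) t))%:R)%:E) =
    (fun t : n.-tuple R => (c * ((0 <= (z : R) <= 1)%R)%:R * (cubeb t)%:R)%:E).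
    by apply: funext => t; rewrite cubeb_cons -mulnb natrM mulrA.
  rewrite IH; last by rewrite mulr_ge0 ?ler0n.
  over.
have := @int_indic_itv R c 0 c0; rewrite add0r; exact.
Qed.
End P2.
Import P2.

Module P3.
Section Construction.
Variable R : realType.
Variable n : nat.
Variable delta p : R.
Hypothesis delta0 : 0 < delta.
Hypothesis p1 : 1 <= p.

Local Notation TT := (n.+1.-tuple R).

Definition AA : R := n%:R + 1.

Lemma AA_ge1 : 1 <= AA.
Proof. by rewrite /AA lerDr ler0n. Qed.

Definition cls (s : R) : nat :=
  if AA <= `|s| <= AA + 1 then (if s < 0 then 0%N else 1%N)
  else if AA + 2 <= `|s| <= AA + 3 then (if s < 0 then 2%N else 3%N) else 4%N.

Definition swp (i : nat) : nat :=
  match i with 0%N => 1%N | 1%N => 0%N | 2%N => 3%N | 3%N => 2%N | _ => 4%N end.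

Lemma cls_opp (s : R) : cls (- s) = swp (cls s).
Proof.
have A1 := AA_ge1.
rewrite /cls normrN.
case: ifP => h1.
  have : s != 0 by apply/eqP => s0; move: h1; rewrite s0 normr0 => /andP[h _]; lra.
  by rewrite oppr_lt0; case: (ltgtP s 0).
case: ifP => h2 //.
have : s != 0 by apply/eqP => s0; move: h2; rewrite s0 normr0 => /andP[h _]; lra.
by rewrite oppr_lt0; case: (ltgtP s 0).
Qed.

Definition reg (x : TT) : nat :=
  if cubeb (behead_tuple x) then cls (tnth x ord0) else 4%N.

Definition lo (i : nat) : R :=
  match i with 0%N => - (AA + 1) | 1%N => AA | 2%N => - (AA + 3) | _ => AA + 2 end.

Lemma cls_box (s : R) i : (i < 4)%N -> (cls s == i) = (lo i <= s <= lo i + 1).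
Proof.
have A1 := AA_ge1.
rewrite /cls /lo.
case: (ltrP s 0) => hs; [rewrite ltr0_norm // | rewrite ger0_norm //].
all: case: ifP => h1; [move/andP: h1 => [h1a h1b] |
   move/negbT: h1; rewrite negb_and -!ltNge => /orP[] h1].
all: try (case: ifP => h2; [move/andP: h2 => [h2a h2b] |
   move/negbT: h2; rewrite negb_and -!ltNge => /orP[] h2]).
all: case: i => [|[|[|[|]]]] //= _.
all: apply/idP/idP.
all: try done.
all: try (move=> /andP[h3 h4]; lra).
all: try (move=> _; apply/andP; split; lra).
all: idtac.
Qed.

Lemma reg_box x i : (i < 4)%N ->
  (reg x == i) = (lo i <= tnth x ord0 <= lo i + 1) && cubeb (behead_tuple x).
Proof.
move=> i4; rewrite /reg; case: ifP => hc; first by rewrite cls_box // andbT.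
by rewrite andbF; case: i i4 => [|[|[|[|]]]].
Qed.

Lemma reg_sign x : (((reg x == 0)%N || (reg x == 2)%N) -> tnth x ord0 < 0) /\
                   (((reg x == 1)%N || (reg x == 3)%N) -> 0 < tnth x ord0).
Proof.
have A1 := AA_ge1.
split => /orP[] h.
- move: h; rewrite reg_box // => /andP[/andP[h1 h2] _]; rewrite /lo in h1 h2; lra.
- move: h; rewrite reg_box // => /andP[/andP[h1 h2] _]; rewrite /lo in h1 h2; lra.
- move: h; rewrite reg_box // => /andP[/andP[h1 h2] _]; rewrite /lo in h1 h2; lra.
- move: h; rewrite reg_box // => /andP[/andP[h1 h2] _]; rewrite /lo in h1 h2; lra.
Qed.

End Construction.
Arguments reg {R n}.
End P3.
Import P3.

Module P4.
Section Polar.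
Variable R : realType.
Variable n : nat.
Variable delta p : R.
Hypothesis delta0 : 0 < delta.

Local Notation TT := (n.+1.-tuple R).
Local Notation reg := (@reg R n).

Definition ea : TT := [tuple ((i == ord0)%N%:R : R) | i < n.+1].

Lemma dotN_ea x : dotN ea x = tnth x ord0.
Proof.
rewrite /dotN big_ord_recl tnth_mktuple eqxx mul1r big1 ?addr0 // => j _.
by rewrite tnth_mktuple mul0r.
Qed.

Lemma dotN_ea_ea : dotN ea ea = 1.
Proof. by rewrite dotN_ea tnth_mktuple eqxx. Qed.

Lemma ea_neq : ea <> origin R n.+1.
Proof.
move=> /(congr1 (fun t => tnth t ord0)); rewrite !tnth_mktuple eqxx => /eqP.
by rewrite oner_eq0.
Qed.

Lemma ea_origin : in_halfspace ea 0 (origin R n.+1).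
Proof. by rewrite /in_halfspace dotN_ea tnth_mktuple. Qed.

Definition sig (x : TT) : TT := cons_tuple (- tnth x ord0) (behead_tuple x).

Lemma reflect_ea x : reflect_hs ea 0 x = sig x.
Proof.
apply: eq_from_tnth => i.
rewrite /reflect_hs tnth_mktuple dotN_ea dotN_ea_ea subr0 divr1.
case: (unliftP ord0 i) => [j ->|->].
  rewrite tnth_mktuple /= mulr0 subr0 /sig tnthS tnth_behead.
  by congr tnth; apply: val_inj; rewrite /= inordK // ltnS ltn_ord.
by rewrite tnth_mktuple eqxx mulr1 /sig tnth0; ring.
Qed.

Lemma reg_sig x : reg (sig x) = swp (reg x).
Proof.
by rewrite /P3.reg /sig behead_cons tnth0; case: ifP => // _; rewrite cls_opp.
Qed.

Definition kk (i : nat) : int :=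
  match i with 0%N => 0 | 1%N => 2 | 2%N => 103 | 3%N => 101 | _ => 50 end.
Definition kk' (i : nat) : int :=
  match i with 0%N => 2 | 1%N => 0 | 2%N => 103 | 3%N => 101 | _ => 50 end.

Definition val (k : nat -> int) (i : nat) : R := delta * (k i)%:~R / 100.

Lemma val_le k i j : (k i <= k j)%R -> val k i <= val k j.
Proof.
move=> h; rewrite /val ler_pM2r ?invr_gt0 ?ltr0n // ler_pM2l //.
by rewrite ler_int.
Qed.

Definition uu (x : TT) : R := val kk (reg x).
Definition uu' (x : TT) : R := val kk' (reg x).

Lemma polar_u : polarize ea 0 uu = uu'.
Proof.
apply: funext => x.
rewrite /polarize /in_halfspace dotN_ea reflect_ea /uu /uu' reg_sig.
have [hn hp] := @reg_sign R n x.
have r4 : (reg x < 5)%N by rewrite /P3.reg; case: ifP => // _; rewrite /cls;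
  case: ifP => _; [case: ifP|case: ifP => _; [case: ifP|]].
move: hn hp r4; case: (reg x) => [|[|[|[|[|]]]]] //= hn hp _.
- by rewrite (ltW (hn erefl)) max_r // val_le.
- by rewrite leNgt (hp erefl) /= min_r // val_le.
- by rewrite (ltW (hn erefl)) max_l // val_le.
- by rewrite leNgt (hp erefl) /= min_l // val_le.
- by case: ifP => _; rewrite ?maxxx ?minxx.
Qed.

Lemma val_cond k i j :
  (delta < `|val k j - val k i|) = (100 < `|k j - k i|)%R.
Proof.
rewrite /val -mulrBl -mulrBr -rmorphB /= normrM normrM (gtr0_norm delta0).
rewrite normfV (gtr0_norm (_ : (0:R) < 100)) ?ltr0n // -intr_norm.
rewrite -mulrA -[X in X < _]mulr1 ltr_pM2l // ltr_pdivlMr ?ltr0n // mul1r.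
by rewrite -(ltr_int R).
Qed.

End Polar.
End P4.
Import P4.

Module P5.
Lemma measurable_cubeb (R : realType) n :
  measurable_fun setT (fun t : n.-tuple R => cubeb t).
Proof.
elim: n => [|n IH].
  have -> : (fun t : 0.-tuple R => cubeb t) = (fun=> true).
    by apply: funext => t; rewrite cubeb0.
  exact: measurable_cst.
have -> : (fun t : n.+1.-tuple R => cubeb t) =
  (fun t => (0 <= tnth t ord0 <= 1) && cubeb (behead_tuple t)).
  apply: funext => t; rewrite [in LHS](tuple_eta t).
  have -> : [tuple of thead t :: behead t] = cons_tuple (thead t) (behead_tuple t).
    exact: val_inj.
  by rewrite cubeb_cons.
apply: measurable_and.
  apply: measurable_and.
    apply: measurable_fun_ler; first exact: measurable_cst.
    exact: measurable_tnth.
  apply: measurable_fun_ler; last exact: measurable_cst.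
  exact: measurable_tnth.
have -> : (fun t : n.+1.-tuple R => cubeb (behead_tuple t)) =
  (fun t : n.-tuple R => cubeb t) \o (fun t : n.+1.-tuple R => [tuple of behead t]).
  by [].
apply: measurableT_comp IH _.
exact: measurable_behead.
Qed.

Lemma measurable_x0 (R : realType) n :
  measurable_fun setT (fun t : n.+1.-tuple R => tnth t ord0).
Proof. exact: measurable_tnth. Qed.

Lemma measurable_reg (R : realType) n (f : nat -> R) :
  measurable_fun setT (fun x : n.+1.-tuple R => f (reg x)).
Proof.
have -> : (fun x : n.+1.-tuple R => f (reg x)) =
  (fun x => if cubeb (behead_tuple x) then
    (if AA R n <= `|tnth x ord0| <= AA R n + 1 then
       (if tnth x ord0 < 0 then f 0%N else f 1%N)
     else if AA R n + 2 <= `|tnth x ord0| <= AA R n + 3 then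
       (if tnth x ord0 < 0 then f 2%N else f 3%N) else f 4%N)
   else f 4%N).
  apply: funext => x; rewrite /reg /cls.
  by case: ifP => //; case: ifP => //; case: ifP => //; case: ifP.
have mc : measurable_fun setT (fun x : n.+1.-tuple R => cubeb (behead_tuple x)).
  have -> : (fun t : n.+1.-tuple R => cubeb (behead_tuple t)) =
    (fun t : n.-tuple R => cubeb t) \o (fun t : n.+1.-tuple R => [tuple of behead t]).
    by [].
  apply: measurableT_comp (measurable_cubeb R n) _.
  exact: measurable_behead.
have mn : measurable_fun setT (fun x : n.+1.-tuple R => `|tnth x ord0|).
  by apply: measurableT_comp; [exact: normr_measurable | exact: measurable_x0].
have mb : forall a b : R, measurable_fun setT
    (fun x : n.+1.-tuple R => a <= `|tnth x ord0| <= b).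
  move=> a b; apply: measurable_and.
    by apply: measurable_fun_ler => //; exact: measurable_cst.
  by apply: measurable_fun_ler => //; exact: measurable_cst.
have ms : measurable_fun setT (fun x : n.+1.-tuple R => tnth x ord0 < 0).
  apply: measurable_fun_ltr; first exact: measurable_x0.
  exact: measurable_cst.
repeat apply: measurable_fun_ifT => //; exact: measurable_cst.
Qed.
End P5.
Import P5.

Module P6.
Section Kernel.
Variable R : realType.
Variable n : nat.
Variable delta p : R.

Local Notation TT := (n.+1.-tuple R).

Definition kern (x y : TT) : R := delta `^ p / distN x y `^ (n.+1%:R + p).

Definition FF (v : TT -> R) (x y : TT) : \bar R :=
  if delta < `|v y - v x| then (kern x y)%:E else 0%E.

Lemma Idelta_eq (v : TT -> R) :
  Idelta p delta v = intRN (fun x => intRN (FF v x)).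
Proof. by []. Qed.

Definition sqd (x y : TT) : R := \sum_(i < n.+1) (tnth x i - tnth y i) ^+ 2.

Lemma sqd_ge0 x y : 0 <= sqd x y.
Proof. by apply: sumr_ge0 => i _; exact: sqr_ge0. Qed.

Lemma distN_sqd x y : distN x y = sqd x y `^ 2^-1.
Proof. by rewrite powR12_sqrt ?sqd_ge0. Qed.

Lemma measurable_kern : measurable_fun setT (fun z : TT * TT => kern z.1 z.2).
Proof.
have -> : (fun z : TT * TT => kern z.1 z.2) =
  (fun z => delta `^ p * ((sqd z.1 z.2) `^ 2^-1) `^ (- (n.+1%:R + p))).
  by apply: funext => z; rewrite /kern distN_sqd powRN.
apply: measurable_funM; first exact: measurable_cst.
apply: (measurableT_comp (measurable_powR _)).
apply: (measurableT_comp (measurable_powR _)).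
rewrite /sqd; apply: measurable_sum => i.
apply: measurable_funX; apply: measurable_funB.
  exact: (measurableT_comp (measurable_tnth i) measurable_fst).
exact: (measurableT_comp (measurable_tnth i) measurable_snd).
Qed.

Lemma measurable_FF (f : nat -> R) :
  measurable_fun setT (fun z : TT * TT => FF (fun x => f (reg x)) z.1 z.2).
Proof.
apply: measurable_fun_ifT.
- apply: measurable_fun_ltr; first exact: measurable_cst.
  apply: measurableT_comp; first exact: normr_measurable.
  apply: measurable_funB.
    exact: (measurableT_comp (measurable_reg R n f) measurable_snd).
  exact: (measurableT_comp (measurable_reg R n f) measurable_fst).
- by apply/measurable_EFinP; exact: measurable_kern.
- exact: measurable_cst.
Qed.

Lemma kern_ge0 x y : 0 <= delta -> 0 <= kern x y.
Proof. by move=> d0; rewrite /kern divr_ge0 ?powR_ge0. Qed.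

Lemma FF_ge0 v x y : 0 <= delta -> (0 <= FF v x y)%E.
Proof. by move=> d0; rewrite /FF; case: ifP => // _; rewrite lee_fin kern_ge0. Qed.

End Kernel.
End P6.
Import P6.

Module P7.
Section Geom.
Variable R : realType.
Variable n : nat.
Variable delta p : R.
Hypothesis delta0 : 0 < delta.
Hypothesis p1 : 1 <= p.

Local Notation TT := (n.+1.-tuple R).
Local Notation kern := (@kern R n delta p).
Local Notation qq := (n.+1%:R + p).
Local Notation sqd := (@sqd R n).

Lemma tnth_lift (x : TT) (j : 'I_n) : tnth x (lift ord0 j) = tnth (behead_tuple x) j.
Proof.
have -> : behead_tuple x = [tuple of behead x] by [].
rewrite tnth_behead; congr tnth; apply: val_inj.
by rewrite /= inordK // ltnS ltn_ord.
Qed.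

Lemma sqd_split (x y : TT) : sqd x y = (tnth x ord0 - tnth y ord0) ^+ 2 +
  \sum_(j < n) (tnth (behead_tuple x) j - tnth (behead_tuple y) j) ^+ 2.
Proof.
rewrite /sqd big_ord_recl; congr (_ + _); apply: eq_bigr => j _.
by rewrite !tnth_lift.
Qed.

Lemma distN_ge (x y : TT) : `|tnth x ord0 - tnth y ord0| <= distN x y.
Proof.
rewrite /distN -sqrtr_sqr ler_sqrt ?sqd_ge0 // -/(sqd x y) sqd_split lerDl.
by apply: sumr_ge0 => j _; exact: sqr_ge0.
Qed.

Lemma distN_le (x y : TT) : cubeb (behead_tuple x) -> cubeb (behead_tuple y) ->
  distN x y <= Num.sqrt ((tnth x ord0 - tnth y ord0) ^+ 2 + n%:R).
Proof.
move=> /forallP cx /forallP cy.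
rewrite /distN ler_sqrt; last by rewrite addr_ge0 ?sqr_ge0 ?ler0n.
rewrite -/(sqd x y) sqd_split lerD2l.
have -> : (n%:R : R) = \sum_(j < n) 1.
  by rewrite sumr_const card_ord.
apply: ler_sum => j _.
move: (cx j) (cy j) => /andP[a1 a2] /andP[b1 b2].
set a := tnth _ j; set b := tnth _ j.
rewrite -/a -/b in a1 a2 b1 b2.
have h1 : -1 <= a - b <= 1 by apply/andP; split; lra.
move/andP: h1 => [h1 h2].
have H : 0 <= (1 - (a - b)) * (1 + (a - b)) by apply: mulr_ge0; lra.
rewrite -subr_ge0; move: H; rewrite (_ : (1 - (a - b)) * (1 + (a - b)) = 1 - (a - b) ^+ 2) //.
ring.
Qed.

Lemma qq_gt0 : 0 < (qq : R).
Proof. have h := ler0n R n.+1; have p1x : (1:R) <= p by []; lra. Qed.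

Lemma kern_le (x y : TT) (e : R) : 0 < e -> e <= distN x y ->
  kern x y <= delta `^ p / e `^ qq.
Proof.
move=> e0 ed.
have d0 : 0 < distN x y by exact: lt_le_trans ed.
rewrite /P6.kern ler_pM2l ?powR_gt0 //.
rewrite lef_pV2 ?posrE ?powR_gt0 //.
by apply: ge0_ler_powR; rewrite ?nnegrE ?(ltW qq_gt0) ?(ltW e0) ?(ltW d0).
Qed.

Lemma kern_ge (x y : TT) (e : R) : 0 < distN x y -> distN x y <= e ->
  delta `^ p / e `^ qq <= kern x y.
Proof.
move=> d0 de.
have e0 : 0 < e by exact: lt_le_trans de.
rewrite /P6.kern ler_pM2l ?powR_gt0 //.
rewrite lef_pV2 ?posrE ?powR_gt0 //.
by apply: ge0_ler_powR; rewrite ?nnegrE ?(ltW qq_gt0) ?(ltW e0) ?(ltW d0).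
Qed.

Definition D1 : R := Num.sqrt (9 + n%:R).
Definition D2 : R := 2 * AA R n + 2.
Definition c1 : R := delta `^ p / D1 `^ qq.
Definition c2 : R := delta `^ p / D2 `^ qq.

Lemma D1_gt0 : 0 < D1.
Proof. by rewrite /D1 sqrtr_gt0 ltr_wpDr ?ler0n. Qed.

Lemma D12 : D1 < D2.
Proof.
have hA : AA R n = n%:R + 1 by [].
have n0 : (0 : R) <= n%:R by rewrite ler0n.
have D2p : 0 < D2 by rewrite /D2 hA; lra.
rewrite /D1 -(gtr0_norm D2p) -sqrtr_sqr ltr_sqrt; last by rewrite exprn_gt0.
rewrite /D2 hA; nra.
Qed.

Lemma c2_gt0 : 0 < c2.
Proof.
by rewrite /c2 divr_gt0 ?powR_gt0 // (lt_trans D1_gt0 D12).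
Qed.

Lemma c12 : c2 < c1.
Proof.
rewrite /c1 /c2 ltr_pM2l ?powR_gt0 //.
rewrite ltf_pV2 ?posrE ?powR_gt0 ?D1_gt0 ?(lt_trans D1_gt0 D12) //.
apply: gt0_ltr_powR; rewrite ?qq_gt0 ?nnegrE ?D12 //.
  exact: ltW D1_gt0.
exact: ltW (lt_trans D1_gt0 D12).
Qed.

End Geom.
End P7.
Import P7.

Module P8.
Lemma intRN_S (R : realType) m (f : m.+1.-tuple R -> \bar R) :
  intRN f = (\int[@lebesgue_measure R]_(x in [set: R])
          intRN (fun t : m.-tuple R => f (cons_tuple x t)))%E.
Proof. by []. Qed.

Local Arguments intRN : simpl never.

Section Main1.
Variable R : realType.
Variable n : nat.
Variable delta p : R.
Hypothesis delta0 : 0 < delta.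
Hypothesis p1 : 1 <= p.

Local Notation TT := (n.+1.-tuple R).
Local Notation reg := (@reg R n).
Local Notation kern := (@kern R n delta p).
Local Notation FF := (@FF R n delta p).
Local Notation val := (@val R delta).
Local Notation lo := (@lo R n).
Local Notation AA := (AA R n).
Local Notation c1 := (@c1 R n delta p).
Local Notation c2 := (@c2 R n delta p).

Lemma reg_lt5 (x : TT) : (reg x < 5)%N.
Proof.
rewrite /P3.reg; case: ifP => // _; rewrite /cls.
by case: ifP => _; [case: ifP|case: ifP => _; [case: ifP|]].
Qed.

Lemma reg_geo {x : TT} {i : nat} : reg x = i -> (i < 4)%N ->
  lo i <= tnth x ord0 <= lo i + 1 /\ cubeb (behead_tuple x).
Proof.
move=> rx i4; have := @reg_box R n x i i4; rewrite rx eqxx => /esym/andP[-> ->].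
by [].
Qed.

Lemma sep {x y : TT} {i j : nat} : reg x = i -> reg y = j -> (i < 4)%N -> (j < 4)%N ->
  i != j -> 1 <= `|tnth x ord0 - tnth y ord0|.
Proof.
move=> rx ry i4 j4 ij.
have [/andP[x1 x2] _] := reg_geo rx i4.
have [/andP[y1 y2] _] := reg_geo ry j4.
have A1 := @AA_ge1 R n.
rewrite ler_normr; clear rx ry.
move: ij x1 x2 y1 y2; rewrite /P3.lo;
case: i i4 => [|[|[|[|]]]] // _; case: j j4 => [|[|[|[|]]]] // _ _ x1 x2 y1 y2;
apply/orP; first [left; lra | right; lra].
Qed.

Lemma far {x y : TT} {i j : nat} : reg x = i -> reg y = j ->
  ((i == 0) && (j == 3) || (i == 3) && (j == 0))%N ->
  D2 R n <= `|tnth x ord0 - tnth y ord0|.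
Proof.
move=> rx ry /orP[] /andP[/eqP ei /eqP ej]; rewrite {}ei in rx; rewrite {}ej in ry.
- have [/andP[x1 x2] _] := reg_geo rx erefl.
  have [/andP[y1 y2] _] := reg_geo ry erefl.
  rewrite /P3.lo in x1 x2 y1 y2; rewrite ler_normr /D2; apply/orP; right; lra.
- have [/andP[x1 x2] _] := reg_geo rx erefl.
  have [/andP[y1 y2] _] := reg_geo ry erefl.
  rewrite /P3.lo in x1 x2 y1 y2; rewrite ler_normr /D2; apply/orP; left; lra.
Qed.

Lemma near {x y : TT} {i j : nat} : reg x = i -> reg y = j ->
  ((i == 1) && (j == 3) || (i == 3) && (j == 1))%N ->
  0 < distN x y /\ distN x y <= D1 R n.
Proof.
move=> rx ry h.
have ij : i != j by move: h => /orP[] /andP[/eqP -> /eqP ->].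
have i4 : (i < 4)%N by move: h => /orP[] /andP[/eqP -> _].
have j4 : (j < 4)%N by move: h => /orP[] /andP[_ /eqP ->].
have s1 := sep rx ry i4 j4 ij.
split; first by apply: (lt_le_trans _ (@distN_ge R n x y)); exact: (lt_le_trans ltr01 s1).
have [/andP[x1 x2] cx] := reg_geo rx i4.
have [/andP[y1 y2] cy] := reg_geo ry j4.
apply: (le_trans (@distN_le R n x y cx cy)).
rewrite /D1 ler_sqrt; last by rewrite addr_ge0 ?ler0n.
rewrite lerD2r.
have : -3 <= tnth x ord0 - tnth y ord0 <= 3.
  clear rx ry.
  move: h x1 x2 y1 y2 => /orP[] /andP[/eqP ei /eqP ej]; subst i j;
  rewrite /P3.lo => x1 x2 y1 y2; apply/andP; split; lra.
move=> /andP[h1 h2].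
have H : 0 <= (3 - (tnth x ord0 - tnth y ord0)) * (3 + (tnth x ord0 - tnth y ord0)).
  by apply: mulr_ge0; lra.
rewrite -subr_ge0; move: H.
rewrite (_ : (3 - (tnth x ord0 - tnth y ord0)) * (3 + (tnth x ord0 - tnth y ord0)) =
   9 - (tnth x ord0 - tnth y ord0) ^+ 2) //; ring.
Qed.


Local Notation u := (@uu R n delta).
Local Notation u' := (@uu' R n delta).

Lemma FF_u (x y : TT) : FF u x y =
  (if (100 < `|kk (reg y) - kk (reg x)|)%R then (kern x y)%:E else 0%E).
Proof. by rewrite /P6.FF /uu (@val_cond R delta delta0). Qed.

Lemma FF_u' (x y : TT) : FF u' x y =
  (if (100 < `|kk' (reg y) - kk' (reg x)|)%R then (kern x y)%:E else 0%E).
Proof. by rewrite /P6.FF /uu' (@val_cond R delta delta0). Qed.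

Lemma kern_c2 {x y : TT} {i j : nat} : reg x = i -> reg y = j ->
  ((i == 0) && (j == 3) || (i == 3) && (j == 0))%N -> kern x y <= c2.
Proof.
move=> rx ry h.
have D2p : 0 < D2 R n by exact: lt_trans (D1_gt0 R n) (D12 R n).
have H1 := far rx ry h.
have H2 := @distN_ge R n x y.
have H3 := le_trans H1 H2.
have H := @kern_le R n delta p delta0 p1 x y (D2 R n) D2p H3.
exact: H.
Qed.

Lemma kern_c1 {x y : TT} {i j : nat} : reg x = i -> reg y = j ->
  ((i == 1) && (j == 3) || (i == 3) && (j == 1))%N -> c1 <= kern x y.
Proof.
move=> rx ry h; have [h1 h2] := near rx ry h.
exact: (@kern_ge R n delta p delta0 p1 x y (D1 R n) h1 h2).
Qed.

Lemma c2_ge0 : 0 <= c2.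
Proof. exact: ltW (@c2_gt0 R n delta p delta0). Qed.

Lemma c1_ge0 : 0 <= c1.
Proof. exact: le_trans c2_ge0 (ltW (@c12 R n delta p delta0 p1)). Qed.

Lemma kern0 (x y : TT) : 0 <= kern x y.
Proof. exact: (@kern_ge0 R n delta p x y (ltW delta0)). Qed.

Lemma pw0 (x y : TT) : reg x = 0%N ->
  (FF u x y <= FF u' x y + (c2 * (reg y == 3)%N%:R)%:E)%E.
Proof.
move=> rx; rewrite FF_u FF_u' rx.
move eq: (reg y) => j; have := reg_lt5 y; rewrite eq.
case: j eq => [|[|[|[|[|]]]]] // ry _ /=;
  rewrite ?mulr0 ?mulr1 ?adde0 ?add0e ?lexx ?lee_fin ?kern0 ?c2_ge0 //.
exact: (kern_c2 rx ry).
Qed.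

Lemma pw1 (x y : TT) : reg x = 1%N ->
  (FF u x y + (c1 * (reg y == 3)%N%:R)%:E <= FF u' x y)%E.
Proof.
move=> rx; rewrite FF_u FF_u' rx.
move eq: (reg y) => j; have := reg_lt5 y; rewrite eq.
case: j eq => [|[|[|[|[|]]]]] // ry _ /=;
  rewrite ?mulr0 ?mulr1 ?adde0 ?add0e ?lexx ?lee_fin ?kern0 ?c2_ge0 //.
exact: (kern_c1 rx ry).
Qed.

Lemma pw2 (x y : TT) : reg x = 2%N -> FF u x y = FF u' x y.
Proof.
move=> rx; rewrite FF_u FF_u' rx.
move eq: (reg y) => j; have := reg_lt5 y; rewrite eq.
by case: j eq => [|[|[|[|[|]]]]] // ry _ /=.
Qed.

Lemma pw4 (x y : TT) : reg x = 4%N -> FF u x y = FF u' x y.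
Proof.
move=> rx; rewrite FF_u FF_u' rx.
move eq: (reg y) => j; have := reg_lt5 y; rewrite eq.
by case: j eq => [|[|[|[|[|]]]]] // ry _ /=.
Qed.

Lemma pw3a (x y : TT) : reg x = 3%N ->
  (FF u x y <= (c2 * (reg y == 0)%N%:R)%:E)%E.
Proof.
move=> rx; rewrite FF_u rx.
move eq: (reg y) => j; have := reg_lt5 y; rewrite eq.
case: j eq => [|[|[|[|[|]]]]] // ry _ /=;
  rewrite ?mulr0 ?mulr1 ?adde0 ?add0e ?lexx ?lee_fin ?kern0 ?c2_ge0 //.
exact: (kern_c2 rx ry).
Qed.

Lemma pw3b (x y : TT) : reg x = 3%N ->
  ((c1 * (reg y == 1)%N%:R)%:E <= FF u' x y)%E.
Proof.
move=> rx; rewrite FF_u' rx.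
move eq: (reg y) => j; have := reg_lt5 y; rewrite eq.
case: j eq => [|[|[|[|[|]]]]] // ry _ /=;
  rewrite ?mulr0 ?mulr1 ?adde0 ?add0e ?lexx ?lee_fin ?kern0 ?c2_ge0 //.
exact: (kern_c1 rx ry).
Qed.


Definition box (x : TT) : bool :=
  (- (AA + 3) <= tnth x ord0 <= - (AA + 3) + (2 * AA + 6)) && cubeb (behead_tuple x).

Lemma fin_bound {x y : TT} {i j : nat} : reg x = i -> reg y = j -> (i < 4)%N -> (j < 4)%N ->
  i != j -> kern x y <= delta `^ p /\ box x /\ box y.
Proof.
move=> rx ry i4 j4 ij.
have A1 := @AA_ge1 R n.
split.
  have s1 := sep rx ry i4 j4 ij.
  have := @kern_le R n delta p delta0 p1 x y 1 ltr01 (le_trans s1 (@distN_ge R n x y)).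
  by rewrite powR1 divr1.
have [/andP[x1 x2] cx] := reg_geo rx i4.
have [/andP[y1 y2] cy] := reg_geo ry j4.
rewrite /box cx cy !andbT; clear rx ry ij.
move: x1 x2 y1 y2; rewrite /P3.lo.
case: i i4 => [|[|[|[|]]]] // _; case: j j4 => [|[|[|[|]]]] // _ x1 x2 y1 y2;
split; apply/andP; split; lra.
Qed.

Lemma pwfin (x y : TT) :
  (FF u x y <= (delta `^ p * (box x)%:R * (box y)%:R)%:E)%E.
Proof.
rewrite FF_u; case: ifP => h; last first.
  by rewrite lee_fin !mulr_ge0 ?powR_ge0 ?ler0n.
move ex: (reg x) => i; move ey: (reg y) => j.
have := reg_lt5 x; have := reg_lt5 y; rewrite ex ey => j5 i5.
rewrite ex ey in h.
have key : (i < 4)%N /\ (j < 4)%N /\ i != j.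
  by move: h; case: i ex i5 => [|[|[|[|[|]]]]] // _ _;
     case: j ey j5 => [|[|[|[|[|]]]]].
case: key => i4 [j4 ij].
have [k [bx by']] := fin_bound ex ey i4 j4 ij.
by rewrite bx by' /= !mulr1 lee_fin.
Qed.


Lemma int_indic_itvL (c a L : R) : 0 <= c -> 0 < L ->
  (\int[@lebesgue_measure R]_(z in [set: R]) (c * ((a <= z <= a + L)%R)%:R)%:E)%E
    = (c * L)%:E.
Proof.
move=> c0 L0.
have -> : (fun z : R => (c * ((a <= z <= a + L)%R)%:R)%:E) =
  (fun z => (c * \1_(`[a, a + L]%classic) z)%:E).
  apply: funext => z; rewrite indicE; congr ((_ * _)%:E); congr (_%:R).
  case: (boolP (a <= z <= a + L)) => H.
    by rewrite mem_set //= in_itv.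
  by rewrite memNset //= in_itv; apply/negP.
have h := @integralZl_indic _ _ R (@lebesgue_measure R) setT measurableT
  (fun _ => `[a, a + L]%classic) c.
rewrite /= in h; rewrite h //; last by move=> /lt_geF; rewrite c0.
rewrite integral_indic // setIT.
have := lebesgue_measure_itv `[a, a + L].
rewrite /= lte_fin ltrDl L0 -EFinD addrAC subrr add0r => Lm.
by rewrite [X in (_ * X)%E](_ : _ = L%:E) //; exact: Lm.
Qed.

Lemma box_int (a L c : R) : 0 <= c -> 0 < L ->
  intRN (fun x : TT => (c * ((a <= tnth x ord0 <= a + L) && cubeb (behead_tuple x))%:R)%:E)
  = (c * L)%:E.
Proof.
move=> c0 L0; rewrite intRN_S.
under eq_integral => z _.
  have -> : (fun t : n.-tuple R => (c * ((a <= tnth (cons_tuple (z : R) t) ord0 <= a + L)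
      && cubeb (behead_tuple (cons_tuple (z : R) t)))%:R)%:E) =
    (fun t : n.-tuple R => (c * ((a <= (z : R) <= a + L)%R)%:R * (cubeb t)%:R)%:E).
    by apply: funext => t; rewrite tnth0 behead_cons -mulnb natrM mulrA.
  rewrite intRN_cube; last by rewrite mulr_ge0 ?ler0n.
  over.
exact: int_indic_itvL.
Qed.

Lemma vol_reg i c : (i < 4)%N -> 0 <= c ->
  intRN (fun x : TT => (c * (reg x == i)%N%:R)%:E) = c%:E.
Proof.
move=> i4 c0.
have -> : (fun x : TT => (c * (reg x == i)%N%:R)%:E) =
  (fun x : TT => (c * ((lo i <= tnth x ord0 <= lo i + 1) && cubeb (behead_tuple x))%:R)%:E).
  by apply: funext => x; rewrite (@reg_box R n x i i4).
by rewrite box_int ?mulr1 ?ltr01.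
Qed.

Lemma vol_box c : 0 <= c -> intRN (fun x : TT => (c * (box x)%:R)%:E) = (c * (2 * AA + 6))%:E.
Proof.
move=> c0; rewrite /box box_int //.
have := @AA_ge1 R n; lra.
Qed.

Lemma mind (f : TT -> bool) (c : R) : measurable_fun setT f ->
  measurable_fun setT (fun x : TT => (c * (f x)%:R)%:E).
Proof.
move=> mf.
have -> : (fun x : TT => (c * (f x)%:R)%:E) = (fun x => if f x then c%:E else 0%E).
  by apply: funext => x; case: (f x); rewrite ?mulr1 ?mulr0.
by apply: measurable_fun_ifT => //; exact: measurable_cst.
Qed.

Lemma mbox : measurable_fun setT box.
Proof.
apply: measurable_and.
  apply: measurable_and.
    by apply: measurable_fun_ler; [exact: measurable_cst | exact: measurable_x0].
  by apply: measurable_fun_ler; [exact: measurable_x0 | exact: measurable_cst].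
have -> : (fun t : TT => cubeb (behead_tuple t)) =
  (fun t : n.-tuple R => cubeb t) \o (fun t : TT => [tuple of behead t]) by [].
apply: measurableT_comp (measurable_cubeb R n) _.
exact: measurable_behead.
Qed.

Lemma mregi (c : R) i : measurable_fun setT (fun x : TT => (c * (reg x == i)%N%:R)%:E).
Proof.
apply/measurable_EFinP.
exact: (@measurable_reg R n (fun k => c * ((k == i)%N)%:R)).
Qed.


Lemma mFF_u : measurable_fun setT (fun z : TT * TT => FF u z.1 z.2).
Proof. exact: (@measurable_FF R n delta p (val kk)). Qed.

Lemma mFF_u' : measurable_fun setT (fun z : TT * TT => FF u' z.1 z.2).
Proof. exact: (@measurable_FF R n delta p (val kk')). Qed.

Lemma msec (v : TT -> R) (x : TT) :
  measurable_fun setT (fun z : TT * TT => FF v z.1 z.2) ->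
  measurable_fun setT (FF v x).
Proof.
move=> mF.
have -> : FF v x = (fun z : TT * TT => FF v z.1 z.2) \o pair x by [].
exact: measurableT_comp mF (pair1_measurable x).
Qed.

Lemma mJ (v : TT -> R) :
  measurable_fun setT (fun z : TT * TT => FF v z.1 z.2) ->
  measurable_fun setT (fun x : TT => intRN (FF v x)).
Proof.
move=> mF; apply: (@measurable_intRN R n.+1 _ TT (FF v) mF).
by move=> x y; exact: FF_ge0 (ltW delta0).
Qed.

Lemma FF0 (v : TT -> R) x y : (0 <= FF v x y)%E.
Proof. exact: FF_ge0 (ltW delta0). Qed.

Lemma ind0 (c : R) i (x : TT) : 0 <= c -> (0 <= (c * (reg x == i)%N%:R)%:E)%E.
Proof. by move=> c0; rewrite lee_fin mulr_ge0 ?ler0n. Qed.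

Lemma pointwise (x : TT) :
  (intRN (FF u x) + (c1 * (reg x == 1)%N%:R)%:E <=
   intRN (FF u' x) + (c2 * (reg x == 0)%N%:R)%:E)%E.
Proof.
have mu := @msec _ x mFF_u; have mu' := @msec _ x mFF_u'.
have c10 := c1_ge0; have c20 := c2_ge0.
move ex: (reg x) => i; have := reg_lt5 x; rewrite ex.
case: i ex => [|[|[|[|[|]]]]] // rx _ /=; rewrite ?mulr0 ?mulr1 ?adde0.
- rewrite -(@vol_reg 3 c2) //.
  rewrite -(@intRN_add R n.+1 (FF u' x) (fun y => (c2 * (reg y == 3)%N%:R)%:E) mu'
    (mregi c2 3) (fun y => FF0 u' x y) (fun y => ind0 c2 3 y c20)).
  apply: intRN_le; [exact: mu | apply: emeasurable_funD => //; exact: mregi |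
    by move=> y; exact: FF0 | by move=> y; exact: (pw0 _ _ rx)].
- rewrite -(@vol_reg 3 c1) //.
  rewrite -(@intRN_add R n.+1 (FF u x) (fun y => (c1 * (reg y == 3)%N%:R)%:E) mu
    (mregi c1 3) (fun y => FF0 u x y) (fun y => ind0 c1 3 y c10)).
  apply: intRN_le; [apply: emeasurable_funD => //; exact: mregi | exact: mu' |
    by move=> y; rewrite adde_ge0 ?FF0 ?ind0 | by move=> y; exact: (pw1 _ _ rx)].
- by rewrite (_ : FF u x = FF u' x) //; apply: funext => y; exact: (pw2 _ _ rx).
- apply: (@le_trans _ _ (c2%:E)).
    rewrite -(@vol_reg 0 c2) //.
    apply: intRN_le; [exact: mu | exact: mregi |
      by move=> y; exact: FF0 | by move=> y; exact: (pw3a _ _ rx)].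
  apply: (@le_trans _ _ (c1%:E)).
    by rewrite lee_fin ltW // (@c12 R n delta p delta0 p1).
  rewrite -(@vol_reg 1 c1) //.
  apply: intRN_le; [exact: mregi | exact: mu' |
    by move=> y; exact: ind0 | by move=> y; exact: (pw3b _ _ rx)].
- by rewrite (_ : FF u x = FF u' x) //; apply: funext => y; exact: (pw4 _ _ rx).
Qed.


Lemma ereal_fin (a b : \bar R) (M d1 d2 : R) : (0 <= a)%E -> (a <= M%:E)%E ->
  (0 <= b)%E -> (a + d1%:E <= b + d2%:E)%E -> d2 < d1 -> (a < b)%E.
Proof.
case: a => [r| |] //; case: b => [s| |] //= _ _ _.
- by rewrite -!EFinD !lee_fin lte_fin => h c; lra.
- by move=> _ _; exact: ltey.
Qed.

Lemma main_ineq :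
  (intRN (fun x => intRN (FF u x)) < intRN (fun x => intRN (FF u' x)))%E.
Proof.
have c10 := c1_ge0; have c20 := c2_ge0.
have dp : 0 <= delta `^ p by exact: powR_ge0.
set L := 2 * AA + 6.
have L0 : 0 <= L by rewrite /L; have := @AA_ge1 R n; lra.
have mJu := @mJ _ mFF_u; have mJu' := @mJ _ mFF_u'.
have J0 : forall v x, (0 <= intRN (FF v x))%E.
  by move=> v x; apply: intRN_ge0 => y; exact: FF0.
have fin : (intRN (fun x => intRN (FF u x)) <= ((delta `^ p * L) * L)%:E)%E.
  rewrite -vol_box; last by rewrite mulr_ge0.
  apply: intRN_le; [exact: mJu | exact: mind mbox | by move=> x; exact: J0 | ].
  move=> x.
  have -> : ((delta `^ p * L) * (box x)%:R) = ((delta `^ p * (box x)%:R) * L).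
    by rewrite mulrAC.
  rewrite -vol_box; last by rewrite mulr_ge0 ?ler0n.
  apply: intRN_le; [exact: (@msec _ x mFF_u) | exact: mind mbox |
    by move=> y; exact: FF0 | by move=> y; exact: pwfin].
have cmp : (intRN (fun x => intRN (FF u x)) + c1%:E <=
            intRN (fun x => intRN (FF u' x)) + c2%:E)%E.
  rewrite -{1}(@vol_reg 1 c1) // -(@vol_reg 0 c2) //.
  rewrite -(@intRN_add R n.+1 (fun x => intRN (FF u x))
     (fun x => (c1 * (reg x == 1)%N%:R)%:E) mJu (mregi c1 1) (J0 u)
     (fun x => ind0 c1 1 x c10)).
  rewrite -(@intRN_add R n.+1 (fun x => intRN (FF u' x))
     (fun x => (c2 * (reg x == 0)%N%:R)%:E) mJu' (mregi c2 0) (J0 u')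
     (fun x => ind0 c2 0 x c20)).
  apply: intRN_le.
  - by apply: emeasurable_funD => //; exact: mregi.
  - by apply: emeasurable_funD => //; exact: mregi.
  - by move=> x; rewrite adde_ge0 ?J0 ?ind0.
  - by move=> x; exact: pointwise.
apply: (@ereal_fin _ _ _ _ _ _ fin _ cmp (@c12 R n delta p delta0 p1)).
- by apply: intRN_ge0 => x; exact: J0.
- by apply: intRN_ge0 => x; exact: J0.
Qed.

End Main1.
End P8.
Import P8.

Theorem theorem1p1 (R : realType) (N : nat) (p : R) :
  (1 <= N)%N -> 1 <= p ->
  exists (delta0 : R) (a : N.-tuple R) (c : R),
    0 < delta0 /\ a <> origin R N /\ in_halfspace a c (origin R N) /\
    forall delta : R, 0 < delta -> delta < delta0 ->
      exists u : N.-tuple R -> R,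
        measurable_fun [set: N.-tuple R] u /\
        (Idelta p delta (polarize a c u) > Idelta p delta u)%E.
Proof.
case: N => [//|n] _ p1.
exists 1, (ea R n), 0.
split; first exact: ltr01.
split; first exact: ea_neq.
split; first exact: ea_origin.
move=> delta d0 _.
exists (uu R n delta); split.
  exact: (@measurable_reg R n (val R delta kk)).
rewrite (@polar_u R n delta d0) !Idelta_eq.
exact: (@main_ineq R n delta p d0 p1).
Qed.
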